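(* Let $S$ be a standard tableau of type $(i_1,\dots,i_m)$ and $D(S)$ its dependence graph. (a) If $B$ is a black arc of $D(S)$ with $b(B)>1$, then there is a black arc sequence from $s(B)+1$ to $t(B)-1$. (b) Let $B$ be a green arc of $D(S)$ with $b(B)>1$. If there is no green arc other than $B$ nested inside $B$, then there is a black arc sequence from $0$ to $t(B)-1$. If there is a green arc other than $B$ nested inside $B$, then there is a black arc sequence from the rightmost endpoint of the green arcs (other than $B$) nested inside $B$ to $t(B)-1$.
   Context: Setting: $n\ge2k\ge0$, $0<i_1<\dots<i_m=n$. A standard tableau of type $(i_1,\dots,i_m)$ is a two-row Young diagram (top row $n-k$ boxes, bottom $k$) in which $i_l$ occurs exactly $i_l-i_{l-1}$ times ($i_0=0$), entries strictly decreasing along rows and each column's top entry $\ge$ its bottom entry. Double entries are $i_l$ with $i_l-i_{l-1}=2$ (in both rows). Weight sequence $a_1\dots a_n$: $a_{i-1}=a_i=\times$ if $i$ is a double entry, otherwise $a_i=\wedge$ if $i$ is in the top row and $a_i=\vee$ if in the bottom row. Extended cup diagram $eC(S)$: prepend $n-2k$ points labelled $\vee$ at positions $-(n-2k)+1,\dots,0$ to the weight sequence (positions $1,\dots,n$), and repeatedly join by a cup any $\vee\wedge$ pair (in this order) that is adjacent after ignoring $\times$'s and already joined points; cups starting at an added point are green, the others black. Dependence graph $D(S)$: nodes numbered $-(n-2k),\dots,0$ and $i_1,\dots,i_m$. For each double entry $i_s$ there is a black arc from $i_s-2$ to $i_s$ labelled $N^{-1}$; for each cup of $eC(S)$ joining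 $i<j$ there is an arc of the same colour from $i-1$ to $j$, labelled $N^{-l}$ if black and $e_l$ if green, $l=\frac12(j-i+1)$. For an arc $B$, $s(B)$ and $t(B)$ are the numbers of its left and right endpoint nodes and $b(B)=\frac12(t(B)-s(B))$. An arc $B'$ is nested inside $B$ if $s(B)\le s(B')<t(B')\le t(B)$. An arc sequence from $a$ to $b$ is a sequence of arcs $B_1,\dots,B_r$ with $s(B_1)=a$, $t(B_r)=b$, $t(B_i)=s(B_{i+1})$; it is black if all $B_i$ are black. *)

(* Defs.v *)
From HB Require Import structures.
From mathcomp Require Import all_boot all_order all_algebra.
Set Implicit Arguments. Unset Strict Implicit. Unset Printing Implicit Defensive.
Import Order.TTheory GRing.Theory Num.Theory.

Inductive wsym := WUp | WDown | WCross.
Definition wsym_eqb (a b : wsym) : bool :=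
  match a, b with
  | WUp, WUp | WDown, WDown | WCross, WCross => true
  | _, _ => false
  end.
Lemma wsym_eqP : Equality.axiom wsym_eqb.
Proof. by case; case; constructor. Qed.
HB.instance Definition _ := hasDecEq.Build wsym wsym_eqP.

Definition is_type (n : nat) (ityp : seq nat) : bool :=
  [&& ityp != [::], 0 < head 0 ityp, sorted ltn ityp & last 0 ityp == n].

(* entry number l (0-based) of the type is nth 0 ityp l = i_{l+1};
   its multiplicity i_{l+1} - i_l (with i_0 = 0). *)
Definition mult (ityp : seq nat) (l : nat) : nat :=
  nth 0 ityp l - nth 0 (0 :: ityp) l.

(* A two-row Young diagram filling: top row (left to right) and bottom row
   (left to right); columns are left justified, column j has top entry
   nth 0 top j and (for j < k) bottom entry nth 0 bot j. *)
Record tableau := Tableau { top : seq nat; bot : seq nat }.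

Definition is_standard (n k : nat) (ityp : seq nat) (T : tableau) : bool :=
  [&& size (top T) == n - k, size (bot T) == k,
      all (fun x => x \in ityp) (top T ++ bot T),
      all (fun l => count_mem (nth 0 ityp l) (top T ++ bot T) == mult ityp l)
          (iota 0 (size ityp)),
      sorted gtn (top T), sorted gtn (bot T) &
      all (fun j => nth 0 (bot T) j <= nth 0 (top T) j) (iota 0 k)].

Definition is_double (ityp : seq nat) (d : nat) : bool :=
  has (fun l => (nth 0 ityp l == d) && (mult ityp l == 2)) (iota 0 (size ityp)).

Definition weight (ityp : seq nat) (T : tableau) (p : nat) : wsym :=
  if is_double ityp p || is_double ityp p.+1 then WCross
  else if p \in top T then WUp else WDown.

(* extended weight: positions -(n-2k)+1 .. 0 carry \/, positions 1..n the
   weight sequence *)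
Definition ext_sym (ityp : seq nat) (T : tableau) (p : int) : wsym :=
  if (p <= 0)%R then WDown else weight ityp T (absz p).

Definition ext_pos (n k : nat) : seq int :=
  [seq (Posz q - Posz (n - 2 * k) + 1)%R | q <- iota 0 (n - 2 * k + n)].

(* Cup diagram: repeatedly join a \/ /\ pair which is adjacent after
   ignoring x's and already joined points (here: always the leftmost such
   pair; the result does not depend on the order). *)
Section Cups.
Variables (ps : seq int) (sym : int -> wsym).

Definition used (cs : seq (int * int)) (p : int) : bool :=
  has (fun c => (c.1 == p) || (c.2 == p)) cs.
Definition freep cs p : bool := (sym p != WCross) && ~~ used cs p.
Definition next_free cs (p : int) : option int :=
  ohead [seq q <- ps | (p < q)%R && freep cs q].
Definition joinable cs p : bool :=
  [&& freep cs p, sym p == WDown &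
      if next_free cs p is Some q then sym q == WUp else false].
Definition cup_step cs : option (int * int) :=
  match [seq p <- ps | joinable cs p] with
  | p :: _ => if next_free cs p is Some q then Some (p, q) else None
  | [::] => None
  end.
Fixpoint cups_iter (fuel : nat) cs : seq (int * int) :=
  match fuel with
  | 0 => cs
  | f.+1 => if cup_step cs is Some c then cups_iter f (c :: cs) else cs
  end.
(* each step joins two of the size ps points, so size ps steps suffice *)
Definition cups : seq (int * int) := cups_iter (size ps) [::].
End Cups.

Definition ext_cups (n k : nat) (ityp : seq nat) (T : tableau) :=
  cups (ext_pos n k) (ext_sym ityp T).

Definition arc := (int * int * bool)%type.
Definition arc_s (B : arc) : int := B.1.1.
Definition arc_t (B : arc) : int := B.1.2.
Definition arc_green (B : arc) : bool := B.2.

Definition dep_arcs (n k : nat) (ityp : seq nat) (T : tableau) : seq arc :=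
  [seq ((Posz d - 2)%R, Posz d, false) | d <- ityp & is_double ityp d] ++
  [seq ((c.1 - 1)%R, c.2, (c.1 <= 0)%R) | c <- ext_cups n k ityp T].

Definition nested (B' B : arc) : bool :=
  [&& (arc_s B <= arc_s B')%R, (arc_s B' < arc_t B')%R & (arc_t B' <= arc_t B)%R].

Fixpoint black_arc_seq (A : seq arc) (a b : int) (l : seq arc) : Prop :=
  match l with
  | [::] => a = b
  | B :: l' => [/\ B \in A, ~~ arc_green B, arc_s B = a &
                   black_arc_seq A (arc_t B) b l']
  end.

(* Main.v *)
Require Import Defs.
From HB Require Import structures.
From mathcomp Require Import all_boot all_order all_algebra zify.
Import Order.TTheory GRing.Theory Num.Theory.
Set Implicit Arguments. Unset Strict Implicit. Unset Printing Implicit Defensive.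
Local Open Scope ring_scope.

Definition cinv (ps : seq int) (sym : int -> wsym) (cs : seq (int * int)) : Prop :=
  [/\ (forall c, c \in cs -> [/\ c.1 < c.2, sym c.1 = WDown, sym c.2 = WUp,
                               c.1 \in ps & c.2 \in ps]),
      (forall c c', c \in cs -> c' \in cs ->
          c.1 = c'.1 \/ c.1 = c'.2 \/ c.2 = c'.1 \/ c.2 = c'.2 -> c = c'),
      (forall c c', c \in cs -> c' \in cs ->
          c.1 < c'.1 -> c'.1 < c.2 -> c.2 < c'.2 -> False)
    & (forall c r, c \in cs -> r \in ps -> c.1 < r -> r < c.2 ->
          sym r != WCross -> used cs r)].

Lemma ohead_filter_min (s : seq int) (P : pred int) q :
  sorted <%R s -> ohead [seq x <- s | P x] = Some q ->
  [/\ q \in s, P q & forall r, r \in s -> P r -> q <= r].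
Proof.
elim: s => [|x s IH] //= Hs.
have Hs' : sorted <%R s by exact: path_sorted Hs.
have Hall : all (fun y => x < y) s by exact: (order_path_min lt_trans Hs).
case Px: (P x) => /=.
  case=> <-; split=> //; first by rewrite mem_head.
  move=> r; rewrite in_cons => /orP [/eqP -> //|rs] _.
  by apply/ltW; move/allP: Hall => /(_ r rs).
move=> /(IH Hs') [qs Pq Hm]; split=> //; first by rewrite in_cons qs orbT.
move=> r; rewrite in_cons => /orP [/eqP ->|rs]; first by rewrite Px.
exact: Hm.
Qed.

Lemma used_cons c cs r : used (c :: cs) r = (c.1 == r) || (c.2 == r) || used cs r.
Proof. by []. Qed.

Lemma usedP cs r : reflect (exists2 c, c \in cs & c.1 = r \/ c.2 = r) (used cs r).
Proof.
apply: (iffP hasP) => [[c cin /orP [/eqP|/eqP] h]|[c cin [h|h]]]; exists c => //;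
  by [left|right|rewrite h eqxx ?orbT].
Qed.

Lemma cup_step_inv ps sym cs c :
  sorted <%R ps -> cinv ps sym cs -> cup_step ps sym cs = Some c ->
  cinv ps sym (c :: cs).
Proof.
move=> Hps [H1 H2 H3 H4].
rewrite /cup_step.
case E: [seq p <- ps | joinable ps sym cs p] => [|p rest] //.
have : p \in [seq p <- ps | joinable ps sym cs p] by rewrite E mem_head.
rewrite mem_filter => /andP [Jp pps].
case E2: (next_free ps sym cs p) => [q|] //; case=> <-.
move: Jp; rewrite /joinable E2 => /and3P [Fp /eqP Sp /eqP Sq].
have [qps /andP [pq Fq] Hmin] := @ohead_filter_min ps (fun x => (p < x) && freep sym cs x) q Hps E2.
move: Fp Fq; rewrite /freep => /andP [Xp Up] /andP [Xq Uq].
have Hnu : forall x, x \in cs -> [/\ x.1 != p, x.2 != p, x.1 != q & x.2 != q].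
  move=> x xin; split; apply/eqP=> h.
  - by move/usedP: Up; apply; exists x => //; left.
  - by move/usedP: Up; apply; exists x => //; right.
  - by move/usedP: Uq; apply; exists x => //; left.
  - by move/usedP: Uq; apply; exists x => //; right.
split.
- move=> x; rewrite in_cons => /orP [/eqP -> /=|]; first by split.
  exact: H1.
- move=> x y; rewrite !in_cons => /orP [/eqP ->|xin] /orP [/eqP ->|yin] //=.
  + have [a b c' d] := Hnu y yin.
    by move=> [h|[h|[h|h]]]; move: a b c' d; rewrite h eqxx.
  + have [a b c' d] := Hnu x xin.
    by move=> [h|[h|[h|h]]]; move: a b c' d; rewrite h eqxx.
  + exact: H2.
- move=> x y; rewrite !in_cons => /orP [/eqP ->|xin] /orP [/eqP ->|yin] //=.
  + move=> ?? ; lia.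
  + (* new (p,q) vs old y: p < y.1 < q < y.2 : q inside y *)
    move=> h1 h2 h3.
    have [_ _ _ _ y2ps] := H1 y yin.
    have := H4 y q yin qps h2 h3 Xq.
    by rewrite (negbTE Uq).
  + move=> h1 h2 h3.
    have := H4 x p xin pps h1 h2 Xp.
    by rewrite (negbTE Up).
  + exact: H3.
- move=> x r; rewrite in_cons => /orP [/eqP ->|xin] /= rps h1 h2 Xr.
    apply/orP; right.
    apply/negPn/negP => Ur.
    have := Hmin r rps; rewrite h1 /freep Xr Ur /= => /(_ isT).
    move=> h; lia.
  apply/orP; right.
  exact: H4 xin rps h1 h2 Xr.
Qed.

Lemma cups_iter_inv ps sym fuel cs :
  sorted <%R ps -> cinv ps sym cs -> cinv ps sym (cups_iter ps sym fuel cs).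
Proof.
move=> Hps; elim: fuel cs => [|f IH] cs Hc //=.
case E: (cup_step ps sym cs) => [c|] //.
by apply: IH; apply: cup_step_inv E.
Qed.

Lemma cups_inv ps sym : sorted <%R ps -> cinv ps sym (cups ps sym).
Proof.
move=> Hps; apply: cups_iter_inv => //; split=> //.
Qed.

Definition balanced (cs : seq (int * int)) (sym : int -> wsym) (dbl : int -> bool)
    (a b : int) : Prop :=
  forall r : int, a < r -> r <= b ->
    (sym r = WCross -> exists e, [/\ dbl e, r = e - 1 \/ r = e, a < e - 1 & e <= b]) /\
    (sym r <> WCross -> exists2 c, c \in cs & [/\ c.1 = r \/ c.2 = r, a < c.1 & c.2 <= b]).

Lemma distinct_ends (cs : seq (int * int))
  (Hdist : forall c c', c \in cs -> c' \in cs ->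
          c.1 = c'.1 \/ c.1 = c'.2 \/ c.2 = c'.1 \/ c.2 = c'.2 -> c = c')
  c c' : c \in cs -> c' \in cs -> c <> c' ->
  [/\ c.1 <> c'.1, c.1 <> c'.2, c.2 <> c'.1 & c.2 <> c'.2].
Proof.
move=> ci ci' ne; split=> h; apply: ne; apply: Hdist => //; tauto.
Qed.

Lemma chain (A : seq (int * int * bool)) (cs : seq (int * int)) (sym : int -> wsym) (dbl : int -> bool)
  (Hcup : forall c, c \in cs -> 1 <= c.1 -> (c.1 - 1, c.2, false) \in A)
  (Hdbl : forall d, dbl d -> (d - 2, d, false) \in A)
  (Hlt : forall c, c \in cs -> c.1 < c.2)
  (Hdist : forall c c', c \in cs -> c' \in cs ->
          c.1 = c'.1 \/ c.1 = c'.2 \/ c.2 = c'.1 \/ c.2 = c'.2 -> c = c')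
  (Hnc : forall c c', c \in cs -> c' \in cs ->
          c.1 < c'.1 -> c'.1 < c.2 -> c.2 < c'.2 -> False)
  (Hnx : forall c, c \in cs -> sym c.1 <> WCross /\ sym c.2 <> WCross)
  (Hdx : forall d, dbl d -> sym (d - 1) = WCross /\ sym d = WCross)
  (Hsp : forall d, dbl d -> dbl (d + 1) -> False) :
  forall (N : nat) (a b : int), b - a <= N%:Z -> 0 <= a -> a <= b ->
    balanced cs sym dbl a b -> exists l, black_arc_seq A a b l.
Proof.
elim=> [|N IH] a b hN ha hab Hb.
  by exists [::]; rewrite /=; lia.
have [->|neq] := eqVneq a b; first by exists [::].
have hab' : a < b by rewrite lt_neqAle neq hab.
have [Hx Hn] := Hb (a + 1) ltac:(lia) ltac:(lia).
have [Sx|/eqP Sx] := eqVneq (sym (a + 1)) WCross; last first.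
- have [c cin [hr h1 h2]] := Hn Sx.
  have lc := Hlt c cin.
  move: cin hr h1 h2 lc; case: c => x y cin /= hr h1 h2 lc.
  have c1 : x = a + 1 by lia.
  have Hb2 : balanced cs sym dbl y b.
    move=> r h1' h2'; have [Hx' Hn'] := Hb r ltac:(lia) h2'; split.
    + move=> Sr; have [e [de hre he1 he2]] := Hx' Sr; exists e; split=> //.
      have [|//] : e - 1 = y \/ y < e - 1 by lia.
      move=> h; have [_ ?] := Hnx _ cin; have [? _] := Hdx e de; simpl in *; congruence.
    + move=> Sr; have [c' c'in [hr' h1'' h2'']] := Hn' Sr; exists c' => //; split=> //.
      have lc' := Hlt c' c'in.
      have [eq|/eqP ne] := eqVneq c' (x, y); first by rewrite eq /= in hr'; lia.
      have [d1 d2 d3 d4] := @distinct_ends cs Hdist _ _ c'in cin ne.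
      simpl in *.
      have [|//] : c'.1 < y \/ y < c'.1 by lia.
      move=> hh; exfalso; apply: (Hnc _ c' cin c'in) => /=; lia.
  have [l Hl] := IH y b ltac:(lia) ltac:(lia) ltac:(lia) Hb2.
  exists ((x - 1, y, false) :: l) => /=; split=> //.
  + by apply: (Hcup _ cin) => /=; lia.
  + rewrite /arc_s /=; lia.
-
  have [e [de hre h1 h2]] := Hx Sx.
  have ee : e = a + 2 by lia.
  have Hb2 : balanced cs sym dbl (a + 2) b.
    move=> r h1' h2'; have [Hx' Hn'] := Hb r ltac:(lia) h2'; split.
    + move=> Sr; have [e' [de' hre' he1 he2]] := Hx' Sr; exists e'; split=> //.
      have [h|[h|//]] : e' = a + 2 \/ e' = a + 3 \/ a + 2 < e' - 1 by lia.
      * lia.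
      * exfalso; apply: (Hsp e de); rewrite ee; have -> : a + 2 + 1 = e' by lia. done.
    + move=> Sr; have [c' c'in [hr' h1'' h2'']] := Hn' Sr; exists c' => //; split=> //.
      have lc' := Hlt c' c'in.
      have [|[|//]] : c'.1 = e - 1 \/ c'.1 = e \/ a + 2 < c'.1 by lia.
      * move=> h; have [? _] := Hnx c' c'in; have [? _] := Hdx e de; congruence.
      * move=> h; have [? _] := Hnx c' c'in; have [_ ?] := Hdx e de; congruence.
  have [l Hl] := IH (a + 2) b ltac:(lia) ltac:(lia) ltac:(lia) Hb2.
  exists ((e - 2, e, false) :: l) => /=; split=> //.
  + exact: Hdbl.
  + rewrite /arc_s /=; lia.
  + by rewrite /arc_t /= ee.
Qed.

Lemma inside (cs : seq (int * int))
  (Hlt : forall c, c \in cs -> c.1 < c.2)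
  (Hdist : forall c c', c \in cs -> c' \in cs ->
          c.1 = c'.1 \/ c.1 = c'.2 \/ c.2 = c'.1 \/ c.2 = c'.2 -> c = c')
  (Hnc : forall c c', c \in cs -> c' \in cs ->
          c.1 < c'.1 -> c'.1 < c.2 -> c.2 < c'.2 -> False)
  x y x' y' r :
  (x, y) \in cs -> (x', y') \in cs -> (x' = r \/ y' = r) -> x < r -> r < y ->
  x < x' /\ y' < y.
Proof.
move=> ci ci' hr h1 h2.
have l1 := Hlt _ ci; have l2 := Hlt _ ci'; simpl in *.
have [eq|/eqP ne] := eqVneq (x', y') (x, y).
  by case: eq => ??; subst; lia.
have [d1 d2 d3 d4] := @distinct_ends cs Hdist _ _ ci' ci ne; simpl in *.
have n1 := Hnc _ _ ci ci'; have n2 := Hnc _ _ ci' ci; simpl in *.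
case: hr => hr; subst r.
- split; first lia.
  have [//|hh] : y' < y \/ y < y' by lia.
  exfalso; apply: n1; lia.
- split; last lia.
  have [//|hh] : x < x' \/ x' < x by lia.
  exfalso; apply: n2; lia.
Qed.

Lemma bal_interior ps sym (dbl : int -> bool) cs (Hc : cinv ps sym cs)
  (Hcont : forall x y r, x \in ps -> y \in ps -> x <= r -> r <= y -> r \in ps)
  (Hcr : forall r, sym r = WCross -> exists e, dbl e /\ (r = e - 1 \/ r = e))
  (Hdx : forall d, dbl d -> sym (d - 1) = WCross /\ sym d = WCross)
  x y : (x, y) \in cs -> balanced cs sym dbl x (y - 1).
Proof.
case: Hc => H1 H2 H3 H4 ci.
have Hlt : forall c, c \in cs -> c.1 < c.2 by move=> c /H1 [].
have [lxy Sx Sy xps yps] := H1 _ ci; simpl in *.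
move=> r h1 h2; split.
- move=> Sr; have [e [de hre]] := Hcr r Sr; exists e; split=> //.
  + have [h|//] : e - 1 = x \/ x < e - 1 by lia.
    by have [? _] := Hdx e de; rewrite -h in Sx; congruence.
  + have [h|//] : e = y \/ e <= y - 1 by lia.
    by have [_ ?] := Hdx e de; rewrite -h in Sy; congruence.
- move=> Sr.
  have rps : r \in ps by apply: (Hcont x y) => //; lia.
  have /usedP [[x' y'] c'in hr] := H4 _ r ci rps ltac:(rewrite /=; lia) ltac:(rewrite /=; lia) (introN eqP Sr).
  exists (x', y') => //; simpl in *.
  have [] := @inside cs Hlt H2 H3 _ _ _ _ _ ci c'in hr h1 ltac:(lia).
  have := Hlt _ c'in; simpl; split=> //; lia.
Qed.

Lemma bal_after ps sym (dbl : int -> bool) cs (Hc : cinv ps sym cs)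
  (Hcont : forall x y r, x \in ps -> y \in ps -> x <= r -> r <= y -> r \in ps)
  (Hcr : forall r, sym r = WCross -> exists e, dbl e /\ (r = e - 1 \/ r = e))
  (Hdx : forall d, dbl d -> sym (d - 1) = WCross /\ sym d = WCross)
  x y x' y' : (x, y) \in cs -> (x', y') \in cs -> x < x' -> y' < y -> x' <= 0 ->
  (forall x'' y'', (x'', y'') \in cs -> x < x'' -> y'' < y -> x'' <= 0 -> y'' <= y') ->
  balanced cs sym dbl y' (y - 1).
Proof.
case: Hc => H1 H2 H3 H4 ci ci' hx hy hx0 Hmax.
have Hlt : forall c, c \in cs -> c.1 < c.2 by move=> c /H1 [].
have [lxy Sx Sy xps yps] := H1 _ ci; simpl in *.
have [lxy' Sx' Sy' xps' yps'] := H1 _ ci'; simpl in *.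
move=> r h1 h2; split.
- move=> Sr; have [e [de hre]] := Hcr r Sr; exists e; split=> //.
  + have [h|//] : e - 1 = y' \/ y' < e - 1 by lia.
    by have [? _] := Hdx e de; rewrite -h in Sy'; congruence.
  + have [h|//] : e = y \/ e <= y - 1 by lia.
    by have [_ ?] := Hdx e de; rewrite -h in Sy; congruence.
- move=> Sr.
  have rps : r \in ps by apply: (Hcont x y) => //; lia.
  have /usedP [[x'' y''] c'in hr] := H4 _ r ci rps ltac:(rewrite /=; lia) ltac:(rewrite /=; lia) (introN eqP Sr).
  exists (x'', y'') => //; simpl in *.
  have [i1 i2] := @inside cs Hlt H2 H3 _ _ _ _ _ ci c'in hr ltac:(lia) ltac:(lia).
  have l'' := Hlt _ c'in; simpl in *.
  split=> //; last lia.
  have [h0|hp] : x'' <= 0 \/ 0 < x'' by lia.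
    by have := Hmax _ _ c'in i1 i2 h0; lia.
  have [eq|/eqP ne] := eqVneq (x'', y'') (x', y').
    by case: eq => ??; subst; lia.
  have [d1 d2 d3 d4] := @distinct_ends cs H2 _ _ c'in ci' ne; simpl in *.
  have [//|hh] : y' < x'' \/ x'' < y' by lia.
  exfalso; apply: (H3 _ _ ci' c'in) => /=; lia.
Qed.

Lemma mem_ext_pos n k r :
  (r \in ext_pos n k) = (1 - Posz (n - 2 * k)%N <= r) && (r <= Posz n).
Proof.
apply/mapP/andP.
  by case=> q; rewrite mem_iota => /andP [h1 h2] ->; split; lia.
case=> h1 h2; exists (absz (r + Posz (n - 2 * k)%N - 1)%R).
  rewrite mem_iota; apply/andP; split; lia.
lia.
Qed.

Lemma ext_pos_sorted n k : sorted <%R (ext_pos n k).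
Proof.
rewrite /ext_pos sorted_map; apply: sub_sorted (iota_ltn_sorted 0 _).
move=> a b /= h; lia.
Qed.

Lemma ext_pos_cont n k x y r : x \in ext_pos n k -> y \in ext_pos n k ->
  x <= r -> r <= y -> r \in ext_pos n k.
Proof. rewrite !mem_ext_pos => /andP [? ?] /andP [? ?] ? ?; apply/andP; split; lia. Qed.

Definition dblz (ityp : seq nat) (x : int) : bool :=
  match x with Posz d => is_double ityp d | Negz _ => false end.

Lemma double_ge2 ityp d : is_double ityp d -> (2 <= d)%N.
Proof.
case/hasP=> l _ /andP [/eqP <- /eqP m2]; move: m2; rewrite /mult; lia.
Qed.

Lemma double_in ityp d : is_double ityp d -> d \in ityp.
Proof.
case/hasP=> l; rewrite mem_iota => /andP [_ hl] /andP [/eqP <- _].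
by apply: mem_nth; move: hl; rewrite add0n.
Qed.

Lemma sym_nonpos ityp T r : r <= 0 -> ext_sym ityp T r = WDown.
Proof. by move=> h; rewrite /ext_sym h. Qed.

Lemma sym_cross ityp T r : ext_sym ityp T r = WCross ->
  exists e, dblz ityp e /\ (r = e - 1 \/ r = e).
Proof.
case: r => [m|m]; last by rewrite /ext_sym.
rewrite /ext_sym; case: m => [|m] //=.
rewrite /weight; case E: (is_double ityp m.+1 || is_double ityp m.+2).
  case/orP: E => E _.
  - by exists (Posz m.+1); split=> //; right.
  - by exists (Posz m.+2); split=> //; left; lia.
by case: (_ \in _).
Qed.

Lemma sym_dbl ityp T d : dblz ityp d ->
  ext_sym ityp T (d - 1) = WCross /\ ext_sym ityp T d = WCross.
Proof.
case: d => [d|d] //= hd.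
have h2 := @double_ge2 _ _ hd.
have -> : Posz d - 1 = Posz d.-1 by lia.
rewrite /ext_sym /=.
have -> : (Posz d.-1 <= 0) = false by lia.
have -> : (Posz d <= 0) = false by lia.
rewrite /weight prednK; last lia.
by rewrite hd orbT.
Qed.

Lemma spacing n ityp d : is_type n ityp -> is_double ityp d -> is_double ityp d.+1 -> False.
Proof.
case/and4P=> _ _ Hs _.
have mono := sorted_ltn_nth ltn_trans 0%N Hs.
case/hasP=> l; rewrite mem_iota => /andP [_ hl] /andP [/eqP hd _].
case/hasP=> l'; rewrite mem_iota => /andP [_ hl'] /andP [/eqP hd' /eqP m2].
have {}hd : nth 0%N ityp l = d := hd.
have {}hd' : nth 0%N ityp l' = d.+1 := hd'.
have {}hl : (l < size ityp)%N by move: hl; rewrite add0n.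
have {}hl' : (l' < size ityp)%N by move: hl'; rewrite add0n.
have M : forall i j, (i < size ityp)%N -> (j < size ityp)%N -> (i < j)%N ->
  (nth 0%N ityp i < nth 0%N ityp j)%N.
  by move=> i j hi hj hij; apply: mono; rewrite ?inE.
have [ll'|l'l] := leqP l' l.
  have [e|lt] := eqVneq l' l; first by move: hd'; rewrite e hd; lia.
  have := M l' l hl' hl; rewrite ltn_neqAle lt ll' hd hd' => /(_ isT).
  lia.
move: m2; rewrite /mult.
case: l' l'l hl' hd' => [//|l'] l'l hl' hd' /=.
have [e|lt] := eqVneq l l'.
  by rewrite hd' -e hd; lia.
have h1' := M l l' hl ltac:(lia) ltac:(rewrite ltn_neqAle lt /=; lia).
have h3' := M l' l'.+1 ltac:(lia) hl' (ltnSn _).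
rewrite hd' in h3'; rewrite hd in h1'.
lia.
Qed.

Lemma dblz_sp n ityp x : is_type n ityp -> dblz ityp x -> dblz ityp (x + 1) -> False.
Proof.
case: x => [d|d] // Ht h1.
have -> : Posz d + 1 = Posz d.+1 by lia.
exact: (@spacing _ _ _ Ht h1).
Qed.

Lemma dblz_arc n k ityp T x : dblz ityp x -> (x - 2, x, false) \in dep_arcs n k ityp T.
Proof.
case: x => [d|d] //= hd.
rewrite /dep_arcs mem_cat; apply/orP; left.
apply/mapP; exists d => //.
by rewrite mem_filter hd (@double_in _ _ hd).
Qed.

Lemma cup_arc n k ityp T c : c \in ext_cups n k ityp T ->
  (c.1 - 1, c.2, c.1 <= 0) \in dep_arcs n k ityp T.
Proof.
move=> cin; rewrite /dep_arcs mem_cat; apply/orP; right.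
by apply/mapP; exists c.
Qed.

Lemma arc_class n k ityp T B : B \in dep_arcs n k ityp T ->
  (exists d, B = (Posz d - 2, Posz d, false)) \/
  (exists x y, (x, y) \in ext_cups n k ityp T /\ B = (x - 1, y, x <= 0)).
Proof.
rewrite /dep_arcs mem_cat => /orP [/mapP [d _ ->]|/mapP [[x y] cin ->]].
  by left; exists d.
by right; exists x, y.
Qed.

Theorem proposition6p9 (n k : nat) (ityp : seq nat) (T : tableau) :
  (2 * k <= n)%N -> is_type n ityp -> is_standard n k ityp T ->
  let A := dep_arcs n k ityp T in
  (* (a) *)
  (forall B, B \in A -> ~~ arc_green B -> (2 < arc_t B - arc_s B)%R ->
     exists l, black_arc_seq A (arc_s B + 1)%R (arc_t B - 1)%R l) /\
  (* (b) *)
  (forall B, B \in A -> arc_green B -> (2 < arc_t B - arc_s B)%R ->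
     let G := [seq B' <- A | arc_green B' && (B' != B) && nested B' B] in
     (G = [::] -> exists l, black_arc_seq A 0%R (arc_t B - 1)%R l) /\
     (forall B', B' \in G -> (forall B'', B'' \in G -> (arc_t B'' <= arc_t B')%R) ->
        exists l, black_arc_seq A (arc_t B') (arc_t B - 1)%R l)).
Proof.
move=> h2k Ht Hst A.
set ps := ext_pos n k.
set sym := ext_sym ityp T.
set cs := ext_cups n k ityp T.
set dbl := dblz ityp.
have Hc : cinv ps sym cs := @cups_inv ps sym (ext_pos_sorted n k).
have Hcont : forall x y r, x \in ps -> y \in ps -> x <= r -> r <= y -> r \in ps.
  by move=> x y r; apply: ext_pos_cont.
have Hcr : forall r, sym r = WCross -> exists e, dbl e /\ (r = e - 1 \/ r = e).
  exact: sym_cross.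
have Hdx : forall d, dbl d -> sym (d - 1) = WCross /\ sym d = WCross.
  exact: sym_dbl.
have Hsp : forall d, dbl d -> dbl (d + 1) -> False.
  by move=> d; apply: dblz_sp Ht.
have Hdbl : forall d, dbl d -> (d - 2, d, false) \in A.
  by move=> d; apply: dblz_arc.
have Hcup : forall c, c \in cs -> 1 <= c.1 -> (c.1 - 1, c.2, false) \in A.
  move=> c cin h; have := cup_arc cin.
  by have -> : (c.1 <= 0) = false by lia.
have Hc' := Hc; case: Hc' => H1 H2 H3 H4.
have Hlt : forall c, c \in cs -> c.1 < c.2 by move=> c /H1 [].
have Hnx : forall c, c \in cs -> sym c.1 <> WCross /\ sym c.2 <> WCross.
  by move=> c /H1 [_ -> -> _ _].
have CH : forall a b, 0 <= a -> a <= b -> balanced cs sym dbl a b ->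
    exists l, black_arc_seq A a b l.
  move=> a b ha hab hb.
  apply: (@chain A cs sym dbl Hcup Hdbl Hlt H2 H3 Hnx Hdx Hsp (absz (b - a))) => //.
  lia.
split.
- move=> B Bin Bng h2.
  case: (arc_class Bin) => [[d Bd]|[x [y [cin Bd]]]]; subst B.
    by move: h2; rewrite /arc_s /arc_t /=; clear; lia.
  move: Bng h2; rewrite /arc_green /arc_s /arc_t /= => Bng h2.
  have lxy := Hlt _ cin; simpl in lxy.
  have -> : x - 1 + 1 = x by clear; lia.
  apply: CH; [clear -Bng; lia|clear -lxy; lia|].
  exact: (bal_interior Hc Hcont Hcr Hdx cin).
- move=> B Bin Bg h2 G.
  case: (arc_class Bin) => [[d Bd]|[x [y [cin Bd]]]]; subst B => //.
  move: Bg h2; rewrite /arc_green /arc_s /arc_t /= => Bg h2.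
  have [lxy Sx Sy xps yps] := H1 _ cin; simpl in lxy, Sx, Sy, xps, yps.
  have inG : forall x'' y'', (x'', y'') \in cs -> x < x'' -> y'' < y -> x'' <= 0 ->
      (x'' - 1, y'', true) \in G.
    move=> x'' y'' c''in h1 h3 h4.
    have l'' := Hlt _ c''in; simpl in l''.
    rewrite mem_filter; apply/andP; split; last first.
      have := cup_arc c''in; simpl; by rewrite h4.
    rewrite /arc_green /=; apply/andP; split.
      by apply/eqP; case=> _ h; clear -h h3; lia.
    by rewrite /nested /arc_s /arc_t /=; apply/and3P; split; clear -h1 h3 l''; lia.
  split.
  + move=> G0.
    have x0 : x = 0.
      have [//|hx] : x = 0 \/ x < 0 by clear -Bg; lia.
      have rps : x + 1 \in ps by apply: (Hcont x y) => //; clear -h2; lia.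
      have Sr : sym (x + 1) != WCross by rewrite /sym sym_nonpos //; clear -hx; lia.
      have /usedP [[x'' y''] c''in hr] :=
        H4 _ (x + 1) cin rps ltac:(rewrite /=; clear; lia)
           ltac:(rewrite /=; clear -h2; lia) Sr.
      simpl in hr.
      have l'' := Hlt _ c''in; simpl in l''.
      have [i1 i2] := @inside cs Hlt H2 H3 _ _ _ _ _ cin c''in hr
           ltac:(clear; lia) ltac:(clear -h2; lia).
      have := inG _ _ c''in i1 i2 ltac:(clear -hr l'' hx; lia).
      by rewrite -/G G0.
    subst x.
    apply: CH; [clear; lia|clear -lxy; lia|].
    exact: (bal_interior Hc Hcont Hcr Hdx cin).
  + move=> B' B'in Bmax.
    have := B'in; rewrite mem_filter => /andP [/andP [/andP [Bg' Bne] Bnest] B'A].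
    case: (arc_class B'A) => [[d Bd]|[x' [y' [c'in Bd]]]]; subst B' => //.
    move: Bg' Bne Bnest; rewrite /arc_green /nested /arc_s /arc_t /= => Bg' Bne /and3P [n1 n2 n3].
    have l' := Hlt _ c'in; simpl in l'.
    have ne : (x', y') <> (x, y).
      by case=> e1 e2; move: Bne; rewrite e1 e2 eqxx.
    have [d1 d2 d3 d4] := @distinct_ends cs H2 _ _ c'in cin ne; rewrite /= in d1 d2 d3 d4.
    have hx : x < x' by clear -n1 d1; lia.
    have hy : y' < y by clear -n3 d4; lia.
    clear d1 d2 d3 d4 n1 n2 n3 Bne ne.
    have Hmax : forall x'' y'', (x'', y'') \in cs -> x < x'' -> y'' < y -> x'' <= 0 ->
        y'' <= y'.
      move=> x'' y'' c''in h1 h3 h4.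
      by have := Bmax _ (inG _ _ c''in h1 h3 h4); rewrite /arc_t /=.
    have [e|ltt] : y' = y - 1 \/ y' < y - 1 by clear -hy; lia.
      by exists [::]; rewrite /=.
    have y'0 : 0 <= y'.
      have [//|hy0] : 0 <= y' \/ y' < 0 by clear; lia.
      have rps : y' + 1 \in ps by apply: (Hcont x y) => //; clear -hx l' ltt; lia.
      have Sr : sym (y' + 1) != WCross by rewrite /sym sym_nonpos //; clear -hy0; lia.
      have /usedP [[x'' y''] c''in hr] :=
        H4 _ (y' + 1) cin rps ltac:(rewrite /=; clear -hx l'; lia)
           ltac:(rewrite /=; clear -ltt; lia) Sr.
      simpl in hr.
      have l'' := Hlt _ c''in; simpl in l''.
      have [i1 i2] := @inside cs Hlt H2 H3 _ _ _ _ _ cin c''in hr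
           ltac:(clear -hx l'; lia) ltac:(clear -ltt; lia).
      have := Hmax _ _ c''in i1 i2 ltac:(clear -hr l'' hy0; lia).
      clear -hr l''; lia.
    apply: CH; [clear -y'0; lia|clear -ltt; lia|].
    exact: (bal_after Hc Hcont Hcr Hdx cin c'in hx hy Bg' Hmax).
Qed.
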